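(* Let $G=(V,E,p)$ be an influence graph that is an in-arborescence. Then for every partial realization $\psi$ under full-adoption feedback, $|\partial(\psi)|\le|{\rm dom}(\psi)|$.
   Context: An in-arborescence is an influence graph whose underlying graph is a directed tree with a root $r$ such that for every node $v$ the unique path between $v$ and $r$ is directed from $v$ to $r$. IC model: each edge has a probability $p_{uv}$; a realization $\phi$ contains each edge independently with probability $p_{uv}$. Full-adoption feedback: selecting $u$ as a seed reveals the live/blocked status of all out-going edges of every node reachable from $u$ in $\phi$. A partial realization $\psi$ records the seeds selected so far (the set ${\rm dom}(\psi)$) with their feedback; $\Gamma(\psi)$ is the set of nodes reachable from ${\rm dom}(\psi)$ through live edges (determined by $\psi$). The boundary $\partial(\psi)$ is a subset of $\Gamma(\psi)$ of minimum cardinality such that $G$ has no directed edge from $\Gamma(\psi)\setminus\partial(\psi)$ to $V\setminus\Gamma(\psi)$ (ties broken arbitrarily). *)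

(* Defs.v *)
From mathcomp Require Import all_boot all_order all_algebra.
Set Implicit Arguments. Unset Strict Implicit. Unset Printing Implicit Defensive.
Import Order.TTheory GRing.Theory Num.Theory.
Local Open Scope ring_scope.

Section InfluenceDefs.
Variable T : finType.

Definition und (E : rel T) : rel T := fun u v => E u v || E v u.

Definition underlying_tree (E : rel T) : Prop :=
  [/\ irreflexive E,
      (forall u v, E u v -> ~~ E v u),
      (forall u v, connect (und E) u v)
    & (forall c : seq T, (2 < size c)%N -> uniq c -> ~~ cycle (und E) c)].

(* In-arborescence: the underlying graph is a tree, and there is a root r such
   that for every node v the (unique) path between v and r is directed from v
   to r. *)
Definition in_arborescence (E : rel T) : Prop :=
  underlying_tree E /\ exists r : T, forall v, connect E v r.

Definition influence_graph (R : numDomainType) (E : rel T) (p : T -> T -> R)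
  : Prop := forall u v, E u v -> 0 <= p u v <= 1.

(* A realization phi (set of live edges) of the IC model: a subset of the
   edges, each edge being live/blocked in a way that has positive probability. *)
Definition realization (R : numDomainType) (E : rel T) (p : T -> T -> R)
  (phi : rel T) : Prop :=
  [/\ (forall u v, phi u v -> E u v),
      (forall u v, phi u v -> 0 < p u v)
    & (forall u v, E u v -> ~~ phi u v -> p u v < 1)].

(* Partial realization psi under full-adoption feedback: determined by its
   domain S (the seeds selected so far) and the realization phi, of which psi
   records the status of all out-going edges of nodes reachable from S. *)
Definition Gamma (S : {set T}) (phi : rel T) : {set T} :=
  [set v | [exists s in S, connect phi s v]].

Definition boundary_cand (E : rel T) (S : {set T}) (phi : rel T)
  (B : {set T}) : Prop :=
  B \subset Gamma S phi /\
  (forall u v, u \in Gamma S phi :\: B -> E u v -> v \in Gamma S phi).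

(* B is a boundary of psi: an admissible candidate of minimum cardinality
   (ties broken arbitrarily, so any such B). *)
Definition is_boundary (E : rel T) (S : {set T}) (phi : rel T)
  (B : {set T}) : Prop :=
  boundary_cand E S phi B /\
  (forall B', boundary_cand E S phi B' -> (#|B| <= #|B'|)%N).

End InfluenceDefs.

(* Main.v *)
Require Import Defs.
From mathcomp Require Import all_boot all_order all_algebra.

Section Aux.
Variable T : finType.
Variable E : rel T.

Lemma no_dcycle : underlying_tree E -> forall u v, E u v -> connect E v u -> False.
Proof.
case=> irr asym _ acyc u v euv /connectP [q pq uq]; subst u.
move: euv; case: (shortenP pq) => q' pq' uq _ {pq q} el.
have cyc : cycle (und E) (v :: q').
  rewrite /= rcons_path (sub_path _ pq') /=; last by move=> a b h; rewrite /und h.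
  by rewrite /und el.
case: q' pq' uq el cyc => [|y [|z q]] /=.
- by rewrite irr.
- by rewrite andbT => eyv _ eyv'; move: (asym _ _ eyv); rewrite eyv'.
- move=> _ uq _ cyc.
  by case/negP: (acyc [:: v, y, z & q] isT uq).
Qed.

Lemma first_meet v2 x a : path E x a -> connect E v2 (last x a) ->
  exists a', [/\ path E x a', connect E v2 (last x a') &
     forall y, y \in x :: a' -> connect E v2 y -> y = last x a'].
Proof.
elim: a x => [|z a IH] x /=.
  move=> _ c; exists [::]; split => // y; by rewrite inE => /eqP ->.
case/andP=> exz pa c.
case: (boolP (connect E v2 x)) => cx.
  exists [::]; split => // y; by rewrite inE => /eqP ->.
have [a' [pa' ca' h]] := IH z pa c.
exists (z :: a'); split => //=; first by rewrite exz.
move=> y; rewrite inE => /orP [/eqP -> | yin] cy; first by rewrite cy in cx.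
exact: h.
Qed.

Lemma outdeg1 : in_arborescence E -> forall u v1 v2, E u v1 -> E u v2 -> v1 = v2.
Proof.
case=> tr [r hr] u v1 v2 e1 e2.
case: (eqVneq v1 v2) => // neq; exfalso.
have tr' := tr; case: tr' => irr asym _ acyc.
have /connectP [a pa ra] := hr v1.
have c2 : connect E v2 (last v1 a) by rewrite -ra.
have [a' [pa' ca' h]] := first_meet v2 v1 a pa c2.
move: ca' h; case: (shortenP pa') => a'' pa'' ua'' sub'' {pa' a ra pa c2}.
set x := last v1 a''.
move=> cx h.
have h' : forall y, y \in v1 :: a'' -> connect E v2 y -> y = x.
  move=> y; rewrite inE => /orP [/eqP -> | /sub'' yin]; apply: h.
    by rewrite inE eqxx.
  by rewrite inE yin orbT.
clear h.
move: cx => /connectP [b0 pb0 xb0].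
move: xb0; case: (shortenP pb0) => b pb ub _ xb {pb0 b0}.
have lastR : last x (rev (belast v2 b)) = v2.
  case: b pb ub xb => [|z b] /= _ _ xb; first by rewrite xb.
  by rewrite rev_cons last_rcons.
pose R := rev (belast v2 b).
pose c := u :: (v1 :: a'') ++ R.
have ubl : uniq (rcons (belast v2 b) x) by rewrite xb -lastI.
have xnb : x \notin belast v2 b by move: ubl; rewrite rcons_uniq => /andP [].
have unA : u \notin v1 :: a''.
  apply/negP => /(path_connect pa'') cu; exact: (no_dcycle tr _ _ e1 cu).
have unR : u \notin R.
  rewrite mem_rev; apply/negP => /mem_belast /(path_connect pb) cu.
  exact: (no_dcycle tr _ _ e2 cu).
have uc : uniq c.
  rewrite /c cons_uniq mem_cat negb_or unA unR !andTb cat_uniq ua'' rev_uniq andTb.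
  move: ubl; rewrite rcons_uniq => /andP [_ ->]; rewrite andbT /=.
  apply/hasPn => y; rewrite mem_rev => yR; apply/negP => yA.
  have yb := mem_belast yR.
  have := h' y yA (path_connect pb yb) => yx.
  by rewrite -yx yR in xnb.
have symu : forall a b, und E a b = und E b a by move=> a0 b1; rewrite /und orbC.
have pR : path (und E) x R.
  rewrite /R xb rev_path.
  apply: sub_path pb => a0 b1 /= h; by rewrite /und h orbT.
have cc : cycle (und E) c.
  rewrite /c /= rcons_cat cat_path rcons_path lastR pR /=.
  rewrite /und e1 e2 /= orbT andbT.
  apply: sub_path pa'' => a0 b1 h; by rewrite h.
have sc : (2 < size c)%N.
  rewrite /c /= size_cat size_rev size_belast.
  have xx : last v1 a'' = last v2 b := xb.
  case Ea: a'' xx => [|z a3] xx; last by [].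
  case Eb: b xx => [|z b3] xx //.
  by move: neq; rewrite /= in xx; rewrite xx eqxx.
by case/negP: (acyc c sc uc).
Qed.
End Aux.

Theorem lemma3 (R : realFieldType) (T : finType) (E : rel T)
  (p : T -> T -> R) :
  influence_graph E p -> in_arborescence E ->
  forall (S : {set T}) (phi : rel T), realization E p phi ->
  forall B : {set T}, is_boundary E S phi B -> (#|B| <= #|S|)%N.
Proof.
move=> _ arb S phi [phiE _ _] B [_ Bmin].
have od := @outdeg1 T E arb.
have fun_phi : forall u a b, phi u a -> phi u b -> a = b.
  by move=> u a b ha hb; apply: (od u); apply: phiE.
have key : forall p s w1 w2, path phi s p -> w1 = last s p -> connect phi s w2 ->
    connect phi w1 w2 || connect phi w2 w1.
  elim=> [|y p0 IH] s w1 w2 /=.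
    by move=> _ -> ->.
  case/andP=> psy pp w1e /connectP [[|y' q] /=].
    move=> _ ->; apply/orP; right; apply/connectP; exists (y :: p0) => //=.
    by rewrite psy.
  case/andP=> psy' pq w2e.
  have yy := fun_phi _ _ _ psy psy'; subst y'.
  apply: (IH y) => //; apply/connectP; by exists q.
pose B' := [set w in Gamma S phi | [exists v, E w v && (v \notin Gamma S phi)]].
have cand : boundary_cand E S phi B'.
  split; first by apply/subsetP => w; rewrite inE => /andP [].
  move=> u v; rewrite in_setD => /andP [nb ug] euv.
  apply/negPn/negP => vn; move: nb; rewrite in_set ug /= => /existsPn /(_ v).
  by rewrite euv vn.
apply: leq_trans (Bmin _ cand) _.
pose f w := odflt w [pick s in S | connect phi s w].
have fS : forall w, w \in B' -> f w \in S /\ connect phi (f w) w.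
  move=> w; rewrite inE => /andP [wg _]; move: wg.
  rewrite /Gamma inE => /existsP [s /andP [sS cs]].
  rewrite /f; case: pickP => [s' /andP [-> ->] //| /(_ s)]; by rewrite sS cs.
have fin : {in B' &, injective f}.
  move=> w1 w2 h1 h2 e.
  have [fS1 c1] := fS _ h1; have [fS2 c2] := fS _ h2.
  rewrite e in c1; move: (f w2) fS2 c1 c2 => s sS c1 c2.
  clear e fS1.
  wlog: w1 w2 h1 h2 c1 c2 / connect phi w1 w2.
    move=> H; have /connectP [p0 pp lp] := c1.
    case/orP: (key _ _ _ _ pp lp c2) => c; [exact: H c | symmetry; exact: H c].
  move=> /connectP [[|y q] /=]; first by move=> _ ->.
  case/andP=> py pq _; exfalso.
  move: h1; rewrite inE => /andP [_ /existsP [v /andP [ev vn]]].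
  have vy := od _ _ _ ev (phiE _ _ py); subst v.
  move: vn; rewrite /Gamma inE => /negP; apply; apply/existsP; exists s.
  by rewrite sS (connect_trans c1 (connect1 py)).
rewrite -(card_in_imset fin); apply: subset_leq_card; apply/subsetP => s.
by case/imsetP => w wB ->; exact: (fS _ wB).1.
Qed.
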